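(* Let ${\cal H}_B,{\cal H}_C$ have dimensions $d_B\le d_C$. Let $(\varphi_i,M_i)_{i=1}^N$ consist of pure states $\ket{\varphi_i}\in{\cal H}_B\otimes{\cal H}_C$ with $E(\varphi_i)\ge\log d_B-\delta$ for all $i$ (some $\delta\ge0$), and a POVM $(M_i)_{i=1}^N$ all of whose elements are PPT, such that $\tr(\varphi_iM_i)\ge1-\epsilon$ for all $i$. If $\epsilon+\sqrt2\,\delta^{1/4}<1$, then $$N\le\bigl(1-\epsilon-\sqrt2\,\delta^{1/4}\bigr)^{-1}d_C.$$
   Context: Logarithms are base 2. $E(\varphi)=S(\tr_C\varphi)$ for pure $\varphi$. An operator $M$ on ${\cal H}_B\otimes{\cal H}_C$ is PPT if its partial transpose $M^\Gamma$ (with respect to a fixed product basis: $\ket{ij}\bra{kl}\mapsto\ket{il}\bra{kj}$) is positive semidefinite. *)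

(* Defs.v *)
From HB Require Import structures.
From mathcomp Require Import all_boot all_order all_algebra.
From mathcomp Require Import sesquilinear spectral.
From mathcomp Require Import complex.
From mathcomp Require Import reals exp.
Set Implicit Arguments.
Unset Strict Implicit.
Unset Printing Implicit Defensive.
Import Order.TTheory GRing.Theory Num.Theory.
Local Open Scope ring_scope.

Section QDefs.
Variable R : realType.
Local Notation C := R[i].

Definition log2 (x : R) : R := ln x / ln 2.

Definition xlogx (x : R) : R := if x == 0 then 0 else x * log2 x.

Definition adj m n (A : 'M[C]_(m, n)) : 'M[C]_(n, m) := (map_mx Num.conj A)^T.

(** Von Neumann entropy S(rho) = - sum_k lambda_k log lambda_k, with the
    eigenvalues lambda_k of rho given by the spectral decomposition of the
    (normal) matrix rho (mathcomp spectral.v). *)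
Definition vN_entropy n (rho : 'M[C]_n) : R :=
  - \sum_(k < n) xlogx (complex.Re (spectral_diag rho 0 k)).

Variables dB dC : nat.

(** Basis |i j> = |i>_B (x) |j>_C of H_B (x) H_C, as an index of 'I_(dB*dC). *)
Definition tidx (i : 'I_dB) (j : 'I_dC) : 'I_(dB * dC) := mxvec_index i j.

Definition untidx (p : 'I_(dB * dC)) : 'I_dB * 'I_dC :=
  enum_val (cast_ord (esym (mxvec_cast dB dC)) p).

Definition ptraceC (X : 'M[C]_(dB * dC)) : 'M[C]_dB :=
  \matrix_(i, k) \sum_(j < dC) X (tidx i j) (tidx k j).

(** Partial transpose w.r.t. the fixed product basis:
    |ij><kl|  |->  |il><kj|, i.e. X^Gamma_{(i,l),(k,j)} = X_{(i,j),(k,l)}. *)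
Definition ptranspose (X : 'M[C]_(dB * dC)) : 'M[C]_(dB * dC) :=
  \matrix_(p, q) X (tidx (untidx p).1 (untidx q).2) (tidx (untidx q).1 (untidx p).2).

Definition proj (phi : 'cV[C]_(dB * dC)) : 'M[C]_(dB * dC) := phi *m adj phi.

Definition ent_entropy (phi : 'cV[C]_(dB * dC)) : R :=
  vN_entropy (ptraceC (proj phi)).

Definition unit_ket (phi : 'cV[C]_(dB * dC)) : Prop := adj phi *m phi = 1%:M.

End QDefs.

(** Positive semidefinite: <v, M v> >= 0 for all v (order of the
    numClosedField C: real and nonnegative). *)
Definition psdmx (R : realType) n (M : 'M[R[i]]_n) : Prop :=
  forall v : 'cV[R[i]]_n, 0 <= (adj v *m M *m v) 0 0.

Definition PPT (R : realType) dB dC (M : 'M[R[i]]_(dB * dC)) : Prop :=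
  psdmx (ptranspose M).

Definition POVM (R : realType) n N (M : 'I_N -> 'M[R[i]]_n) : Prop :=
  (forall k, psdmx (M k)) /\ \sum_(k < N) M k = 1%:M.

(* Main.v *)
Require Import Defs.
From HB Require Import structures.
From mathcomp Require Import all_boot all_order all_algebra.
From mathcomp Require Import sesquilinear spectral complex.
From mathcomp Require Import reals exp.
From mathcomp Require Import ring lra.
Set Implicit Arguments.
Unset Strict Implicit.
Unset Printing Implicit Defensive.
Import Order.TTheory GRing.Theory Num.Theory.
Local Open Scope ring_scope.

Section Basic.
Variable R : realType.
Local Notation C := R[i].
Local Notation "x %:C" := ((x%:C)%C : C) : ring_scope.

Lemma ReD (x y : C) : complex.Re (x + y) = complex.Re x + complex.Re y.
Proof. by case: x; case: y. Qed.
Lemma ReN (x : C) : complex.Re (- x) = - complex.Re x.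
Proof. by case: x. Qed.
Lemma ReB (x y : C) : complex.Re (x - y) = complex.Re x - complex.Re y.
Proof. by rewrite ReD ReN. Qed.
Lemma Re0 : complex.Re (0 : C) = 0. Proof. by []. Qed.
Lemma Re_sum I (r : seq I) (P : pred I) (F : I -> C) :
  complex.Re (\sum_(i <- r | P i) F i) = \sum_(i <- r | P i) complex.Re (F i).
Proof.
exact: (big_morph _ ReD Re0).
Qed.
Lemma ReRM (a : R) (x : C) : complex.Re (a%:C * x) = a * complex.Re x.
Proof. case: x => u v /=; by rewrite !mul0r subr0. Qed.
Lemma ReR (a : R) : complex.Re (a%:C) = a. Proof. by []. Qed.
Lemma Re_ge0 (x : C) : 0 <= x -> 0 <= complex.Re x.
Proof. by rewrite lecE => /andP[_]. Qed.
Lemma Re_le (x y : C) : x <= y -> complex.Re x <= complex.Re y.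
Proof. by rewrite lecE => /andP[_]. Qed.
Lemma Re_conj (x : C) : complex.Re (x^*) = complex.Re x.
Proof. by case: x. Qed.

Definition fm n (x : 'cV[C]_n) (M : 'M[C]_n) (y : 'cV[C]_n) : C :=
  (adj x *m M *m y) 0 0.

Lemma fmE n (x : 'cV[C]_n) M y :
  fm x M y = \sum_p \sum_q (x p 0)^* * M p q * y q 0.
Proof.
rewrite /fm mxE; under eq_bigr => q _ do rewrite mxE big_distrl /=.
rewrite exchange_big /=; apply: eq_bigr => p _; apply: eq_bigr => q _.
by rewrite /adj !mxE.
Qed.

Lemma fmDl n (x1 x2 : 'cV[C]_n) M y : fm (x1 + x2) M y = fm x1 M y + fm x2 M y.
Proof.
rewrite !fmE -big_split; apply: eq_bigr => p _; rewrite -big_split.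
by apply: eq_bigr => q _; rewrite mxE rmorphD /= !mulrDl.
Qed.
Lemma fmDr n (x : 'cV[C]_n) M y1 y2 : fm x M (y1 + y2) = fm x M y1 + fm x M y2.
Proof.
rewrite !fmE -big_split; apply: eq_bigr => p _; rewrite -big_split.
by apply: eq_bigr => q _; rewrite mxE !mulrDr.
Qed.
Lemma fmZl n a (x : 'cV[C]_n) M y : fm (a *: x) M y = a^* * fm x M y.
Proof.
rewrite !fmE mulr_sumr; apply: eq_bigr => p _; rewrite mulr_sumr.
by apply: eq_bigr => q _; rewrite mxE rmorphM /= !mulrA.
Qed.
Lemma fmZr n a (x : 'cV[C]_n) M y : fm x M (a *: y) = a * fm x M y.
Proof.
rewrite !fmE mulr_sumr; apply: eq_bigr => p _; rewrite mulr_sumr.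
by apply: eq_bigr => q _; rewrite mxE mulrCA.
Qed.
Lemma fmNl n (x : 'cV[C]_n) M y : fm (- x) M y = - fm x M y.
Proof. by rewrite -scaleN1r fmZl rmorphN rmorph1 mulN1r. Qed.
Lemma fmNr n (x : 'cV[C]_n) M y : fm x M (- y) = - fm x M y.
Proof. by rewrite -scaleN1r fmZr mulN1r. Qed.
Lemma fmBl n (x1 x2 : 'cV[C]_n) M y : fm (x1 - x2) M y = fm x1 M y - fm x2 M y.
Proof. by rewrite fmDl fmNl. Qed.
Lemma fmBr n (x : 'cV[C]_n) M y1 y2 : fm x M (y1 - y2) = fm x M y1 - fm x M y2.
Proof. by rewrite fmDr fmNr. Qed.
Lemma fm0l n M (y : 'cV[C]_n) : fm 0 M y = 0.
Proof. by rewrite -(scale0r (0 : 'cV[C]_n)) fmZl rmorph0 mul0r. Qed.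
Lemma fm0r n M (x : 'cV[C]_n) : fm x M 0 = 0.
Proof. by rewrite -(scale0r (0 : 'cV[C]_n)) fmZr mul0r. Qed.
Lemma fm_suml n I (r : seq I) (P : pred I) (x : I -> 'cV[C]_n) M y :
  fm (\sum_(i <- r | P i) x i) M y = \sum_(i <- r | P i) fm (x i) M y.
Proof. exact: (big_morph (fun z => fm z M y) (fun a b => fmDl a b M y) (fm0l M y)). Qed.
Lemma fm_sumr n I (r : seq I) (P : pred I) (y : I -> 'cV[C]_n) M x :
  fm x M (\sum_(i <- r | P i) y i) = \sum_(i <- r | P i) fm x M (y i).
Proof. exact: (big_morph (fun z => fm x M z) (fmDr x M) (fm0r M x)). Qed.
Lemma fmDm n (x : 'cV[C]_n) M1 M2 y : fm x (M1 + M2) y = fm x M1 y + fm x M2 y.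
Proof. by rewrite /fm mulmxDr mulmxDl mxE. Qed.
Lemma fmNm n (x : 'cV[C]_n) M y : fm x (- M) y = - fm x M y.
Proof. by rewrite /fm mulmxN mulNmx mxE. Qed.
Lemma fm_summ n I (r : seq I) (P : pred I) (M : I -> 'M[C]_n) x y :
  fm x (\sum_(i <- r | P i) M i) y = \sum_(i <- r | P i) fm x (M i) y.
Proof.
have fm0m : fm x 0 y = 0 by rewrite /fm mulmx0 mul0mx mxE.
exact: (big_morph (fun z => fm x z y) (fun a b => fmDm x a b y) fm0m).
Qed.

Definition ip n (x y : 'cV[C]_n) := fm x 1%:M y.
Lemma ipE n (x y : 'cV[C]_n) : ip x y = \sum_p (x p 0)^* * y p 0.
Proof.
rewrite /ip fmE; apply: eq_bigr => p _; rewrite (bigD1 p) //= big1 ?addr0.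
  by rewrite mxE eqxx mulr1.
by move=> q /negbTE nq; rewrite mxE eq_sym nq mulr0 mul0r.
Qed.
Lemma ip_conj n (x y : 'cV[C]_n) : ip y x = (ip x y)^*.
Proof.
rewrite !ipE rmorph_sum; apply: eq_bigr => p _.
by rewrite rmorphM /= conjCK mulrC.
Qed.
Lemma ip_ge0 n (x : 'cV[C]_n) : 0 <= ip x x.
Proof.
rewrite ipE; apply: sumr_ge0 => p _; rewrite mulrC.
exact: mulcJ_ge0.
Qed.
Lemma ip_eq0 n (x : 'cV[C]_n) : ip x x = 0 -> x = 0.
Proof.
rewrite ipE => /eqP; rewrite psumr_eq0; last first.
  by move=> p _; rewrite mulrC; exact: mulcJ_ge0.
move=> /allP H; apply/matrixP => p j; rewrite ord1 mxE.
have := H p (mem_index_enum p).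
by rewrite /= mulf_eq0 conjC_eq0 orbb => /eqP.
Qed.

End Basic.

Section Tensor.
Variable R : realType.
Local Notation C := R[i].
Variables dB dC : nat.

Lemma untidxK (i : 'I_dB) (j : 'I_dC) : untidx (tidx i j) = (i, j).
Proof. by rewrite /untidx /tidx /mxvec_index cast_ordK enum_rankK. Qed.

Lemma sum_tidx (F : 'I_(dB * dC) -> C) :
  \sum_p F p = \sum_i \sum_j F (tidx i j).
Proof.
rewrite (reindex _ (curry_mxvec_bij _ _)) /= pair_bigA /=.
by apply: eq_bigr => [[i j]] _.
Qed.

Definition tv (a : 'cV[C]_dB) (b : 'cV[C]_dC) : 'cV[C]_(dB * dC) :=
  \col_p (a (untidx p).1 0 * b (untidx p).2 0).

Lemma tvE a b i j : tv a b (tidx i j) 0 = a i 0 * b j 0.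
Proof. by rewrite /tv mxE untidxK. Qed.

Lemma ip_tv a b c d : ip (tv a b) (tv c d) = ip a c * ip b d.
Proof.
rewrite !ipE sum_tidx big_distrl; apply: eq_bigr => i _ /=.
rewrite big_distrr; apply: eq_bigr => j _ /=.
by rewrite !tvE rmorphM /=; ring.
Qed.

Definition conjv n (x : 'cV[C]_n) := map_mx Num.conj x.

Lemma sum3_perm (I J K : finType) (F : I -> J -> K -> C) :
  \sum_i \sum_j \sum_k F i j k = \sum_k \sum_j \sum_i F i j k.
Proof.
rewrite exchange_big; under eq_bigr => j _ do rewrite exchange_big.
by rewrite exchange_big.
Qed.

Lemma fm_ptr a b c d (M : 'M[C]_(dB * dC)) :
  fm (tv a b) M (tv c d) = fm (tv a (conjv d)) (ptranspose M) (tv c (conjv b)).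
Proof.
rewrite !fmE !sum_tidx; apply: eq_bigr => i _.
under eq_bigr => j _ do rewrite sum_tidx.
under [RHS]eq_bigr => j _ do rewrite sum_tidx.
rewrite sum3_perm; apply: eq_bigr => l _; apply: eq_bigr => k _.
apply: eq_bigr => j _.
rewrite !tvE /ptranspose /conjv !mxE !untidxK /= !rmorphM /= conjCK.
ring.
Qed.

End Tensor.

Section Bessel.
Variable R : realType.
Local Notation C := R[i].

Lemma adjM m n p (A : 'M[C]_(m, n)) (B : 'M[C]_(n, p)) :
  adj (A *m B) = adj B *m adj A.
Proof. by rewrite /adj map_mxM trmx_mul. Qed.
Lemma adjK m n (A : 'M[C]_(m, n)) : adj (adj A) = A.
Proof. by apply/matrixP => i j; rewrite /adj !mxE conjCK. Qed.
Lemma adjD m n (A B : 'M[C]_(m, n)) : adj (A + B) = adj A + adj B.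
Proof. by apply/matrixP => i j; rewrite /adj !mxE rmorphD. Qed.
Lemma adjN m n (A : 'M[C]_(m, n)) : adj (- A) = - adj A.
Proof. by apply/matrixP => i j; rewrite /adj !mxE rmorphN. Qed.
Lemma adj0 m n : adj (0 : 'M[C]_(m, n)) = 0.
Proof. by apply/matrixP => i j; rewrite /adj !mxE rmorph0. Qed.
Lemma adj1 n : adj (1%:M : 'M[C]_n) = 1%:M.
Proof. by apply/matrixP => i j; rewrite /adj !mxE eq_sym rmorphMn rmorph1. Qed.
Lemma adj_sum m n I (r : seq I) (P : pred I) (F : I -> 'M[C]_(m, n)) :
  adj (\sum_(i <- r | P i) F i) = \sum_(i <- r | P i) adj (F i).
Proof. exact: (big_morph _ (@adjD m n) (@adj0 m n)). Qed.
Lemma mxtrace_sum n I (r : seq I) (P : pred I) (F : I -> 'M[C]_n) :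
  \tr (\sum_(i <- r | P i) F i) = \sum_(i <- r | P i) \tr (F i).
Proof. exact: (big_morph _ (@mxtraceD _ n) (@mxtrace0 _ n)). Qed.

Lemma adjKmx_entry n m (A B : 'M[C]_(n, m)) K i j :
  (adj A *m K *m B) i j = fm (col i A) K (col j B).
Proof.
rewrite fmE mxE; under eq_bigr => q _ do rewrite mxE big_distrl /=.
rewrite exchange_big /=; apply: eq_bigr => p _; apply: eq_bigr => q _.
by rewrite /adj !mxE.
Qed.

Lemma fm_tr n (x : 'cV[C]_n) K : fm x K x = \tr (x *m adj x *m K).
Proof.
by rewrite /fm -trace_mx11 mxtrace_mulC !mulmxA.
Qed.

Lemma psd_tr n (K : 'M[C]_n) (P : 'M[C]_n) : psdmx K -> 0 <= \tr (adj P *m K *m P).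
Proof.
move=> hK; rewrite /mxtrace; apply: sumr_ge0 => j _.
rewrite adjKmx_entry; exact: hK.
Qed.

Lemma bessel n (I : finType) (e : I -> 'cV[C]_n) (K : 'M[C]_n) :
  psdmx K -> (forall a b, a != b -> ip (e a) (e b) = 0) ->
  (forall a, ip (e a) (e a) = 1 \/ e a = 0) ->
  \sum_a complex.Re (fm (e a) K (e a)) <= complex.Re (\tr K).
Proof.
move=> hK horth hnorm.
pose Q := \sum_a e a *m adj (e a).
have hE a b : e a *m adj (e a) *m (e b *m adj (e b)) =
    if a == b then e a *m adj (e a) else 0.
  rewrite mulmxA -(mulmxA (e a)) [adj (e a) *m e b]mx11_scalar.
  have -> : (adj (e a) *m e b) 0 0 = ip (e a) (e b) by rewrite /ip /fm mulmx1.
  case: eqP => [<-|/eqP nab]; last by rewrite horth // mul_mx_scalar scale0r mul0mx.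
  case: (hnorm a) => [->|->]; first by rewrite mulmx1.
  by rewrite !mul0mx.
have hQQ : Q *m Q = Q.
  rewrite /Q mulmx_suml; apply: eq_bigr => a _; rewrite mulmx_sumr.
  rewrite (bigD1 a) //= big1 ?addr0; first by rewrite hE eqxx.
  by move=> b nba; rewrite hE eq_sym (negbTE nba).
have hQadj : adj Q = Q.
  by rewrite /Q adj_sum; apply: eq_bigr => a _; rewrite adjM adjK.
pose P := 1%:M - Q.
have hPP : P *m P = P.
  by rewrite /P mulmxBl mul1mx mulmxBr mulmx1 hQQ subrr subr0.
have hPadj : adj P = P by rewrite /P adjD adjN adj1 hQadj.
have htrQ : \sum_a fm (e a) K (e a) = \tr (Q *m K).
  rewrite /Q mulmx_suml mxtrace_sum; apply: eq_bigr => a _; exact: fm_tr.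
have htrK : \tr K = \tr (Q *m K) + \tr (P *m K).
  by rewrite /P mulmxBl mul1mx raddfB /= addrC subrK.
have hP0 : 0 <= \tr (P *m K).
  have -> : P *m K = P *m P *m K by rewrite hPP.
  rewrite -mulmxA mxtrace_mulC.
  have -> : P *m K *m P = adj P *m K *m P by rewrite hPadj.
  exact: psd_tr.
rewrite -Re_sum htrQ htrK ReD lerDl; exact: Re_ge0.
Qed.

End Bessel.

Section PPT.
Variable R : realType.
Local Notation C := R[i].
Variables dB dC : nat.

Lemma ppt_bound (I : finType) (v : I -> 'cV[C]_dB) (w : I -> 'cV[C]_dC)
  (M : 'M[C]_(dB * dC)) :
  psdmx (ptranspose M) ->
  \sum_s \sum_t complex.Re (fm (tv (v s) (w s)) M (tv (v t) (w t))) <=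
  \sum_s \sum_t complex.Re (fm (tv (v s) (w t)) M (tv (v s) (w t))).
Proof.
move=> hN; set N := ptranspose M.
pose x s t := tv (v s) (conjv (w t)).
pose f s t := complex.Re (fm (x s t) N (x t s)).
pose g s t := complex.Re (fm (x s t) N (x s t)).
have -> : \sum_s \sum_t complex.Re (fm (tv (v s) (w s)) M (tv (v t) (w t)))
   = \sum_s \sum_t f s t.
  by apply: eq_bigr => s _; apply: eq_bigr => t _; rewrite fm_ptr.
have -> : \sum_s \sum_t complex.Re (fm (tv (v s) (w t)) M (tv (v s) (w t)))
   = \sum_s \sum_t g s t.
  by apply: eq_bigr => s _; apply: eq_bigr => t _; rewrite fm_ptr.
have key s t : f s t + f t s <= g s t + g t s.
  have := Re_ge0 (hN (x s t - x t s)).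
  rewrite -/(fm _ _ _) fmBl !fmBr !ReB /f /g; lra.
have hf : \sum_s \sum_t f s t + \sum_s \sum_t f s t
    = \sum_s \sum_t (f s t + f t s).
  rewrite {2}exchange_big -big_split /=; apply: eq_bigr => s _.
  by rewrite -big_split.
have hg : \sum_s \sum_t g s t + \sum_s \sum_t g s t
    = \sum_s \sum_t (g s t + g t s).
  rewrite {2}exchange_big -big_split /=; apply: eq_bigr => s _.
  by rewrite -big_split.
have : \sum_s \sum_t (f s t + f t s) <= \sum_s \sum_t (g s t + g t s).
  by apply: ler_sum => s _; apply: ler_sum => t _; exact: key.
rewrite -hf -hg; lra.
Qed.

End PPT.

Section Entropy.
Variable R : realType.

Lemma ln_le_sub1 (x : R) : 0 < x -> ln x <= x - 1.
Proof.
move=> x0; have := expR_ge1Dx (ln x); rewrite lnK ?posrE //; lra.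
Qed.

Lemma ln_sqrt (x : R) : 0 < x -> ln (Num.sqrt x) = ln x / 2.
Proof.
move=> x0; have sx : 0 < Num.sqrt x by rewrite sqrtr_gt0.
have : ln (Num.sqrt x * Num.sqrt x) = ln (Num.sqrt x) + ln (Num.sqrt x).
  by rewrite lnM ?posrE.
rewrite -expr2 sqr_sqrtr ?ltW // => ->; lra.
Qed.

Lemma entropy_bound (d : nat) (lam : 'I_d -> R) (delta : R) :
  (0 < d)%N -> (forall s, 0 <= lam s) -> \sum_s lam s = 1 ->
  log2 (d%:R : R) - delta <= - \sum_s xlogx (lam s) -> 0 <= delta ->
  d%:R * (1 - delta) <= (\sum_s Num.sqrt (lam s)) ^+ 2.
Proof.
move=> d0 lam0 lam1 hent delta0.
set Z := \sum_s Num.sqrt (lam s).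
have Z0 : 0 < Z.
  rewrite lt0r sumr_ge0 ?andbT; last by move=> s _; exact: sqrtr_ge0.
  apply/negP => /eqP /psumr_eq0P H.
  have H' := H (fun t _ => sqrtr_ge0 (lam t)).
  have : \sum_s lam s = 0.
    apply: big1 => s _; have := H' s isT.
    move/eqP; rewrite sqrtr_eq0 => hs; apply/eqP; rewrite eq_le hs lam0.
    done.
  by rewrite lam1 => /eqP; rewrite oner_eq0.
have ln2_0 : 0 < ln (2 : R) by apply: ln_gt0; lra.
have ln2_1 : ln (2 : R) <= 1 by have := ln_le_sub1 (x := 2); lra.
pose H := - \sum_s lam s * ln (lam s).
have hH : ln d%:R - delta * ln 2 <= H.
  have heq : - \sum_s xlogx (lam s) = H / ln 2.
    rewrite /H mulNr mulr_suml; congr (- _); apply: eq_bigr => s _.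
    rewrite /xlogx /log2; case: eqP => [->|_]; first by rewrite !mul0r.
    by rewrite mulrA.
  move: hent; rewrite heq /log2 => hent.
  have := ler_wpM2r (ltW ln2_0) hent.
  rewrite mulrBl divfK ?gt_eqF // divfK ?gt_eqF //.
have gibbs : H <= 2 * ln Z.
  have hs s : lam s * (- ln (lam s) / 2 - ln Z) <= Num.sqrt (lam s) / Z - lam s.
    have := lam0 s; rewrite le0r => /orP [/eqP ->|ls0].
      by rewrite sqrtr0 !mul0r subrr.
    have sq0 : 0 < Num.sqrt (lam s) by rewrite sqrtr_gt0.
    have b0 : 0 < Num.sqrt (lam s) / Z by apply: divr_gt0.
    have := ln_le_sub1 (divr_gt0 b0 ls0).
    rewrite ln_div ?posrE // ln_div ?posrE // ln_sqrt //.
    move=> h; have := ler_wpM2l (ltW ls0) h.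
    have e1 : lam s * (Num.sqrt (lam s) / Z / lam s - 1) = Num.sqrt (lam s) / Z - lam s.
      by field; rewrite !gt_eqF.
    have e2 : lam s * (ln (lam s) / 2 - ln Z - ln (lam s)) = lam s * (- ln (lam s) / 2 - ln Z).
      by field.
    by rewrite e1 e2.
  have : \sum_s lam s * (- ln (lam s) / 2 - ln Z) <= \sum_s (Num.sqrt (lam s) / Z - lam s).
    by apply: ler_sum => s _; exact: hs.
  rewrite sumrB -mulr_suml divff ?gt_eqF // lam1 subrr.
  under eq_bigr => s _ do rewrite mulrBr mulrA.
  rewrite sumrB -[\sum_s lam s * ln Z]mulr_suml lam1 mul1r.
  have -> : \sum_i lam i * - ln (lam i) / 2 = H / 2.
    rewrite /H mulNr mulr_suml -sumrN; apply: eq_bigr => s _; by rewrite mulrN mulNr.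
  lra.
have hZ : ln d%:R - delta * ln 2 <= ln (Z ^+ 2).
  by rewrite expr2 lnM ?posrE //; lra.
have d0R : 0 < (d%:R : R) by rewrite ltr0n.
have Z20 : 0 < Z ^+ 2 by rewrite exprn_gt0.
have : - (delta * ln 2) <= ln (Z ^+ 2 / d%:R) by rewrite ln_div ?posrE //; lra.
rewrite -ler_expR lnK ?posrE ?divr_gt0 // => h.
have h2 := expR_ge1Dx (- (delta * ln 2)).
have h3 : 1 - delta <= Z ^+ 2 / d%:R.
  apply: le_trans h; apply: le_trans h2.
  have : delta * ln 2 <= delta by rewrite -{2}[delta]mulr1 ler_wpM2l.
  lra.
by rewrite -ler_pdivlMl // mulrC.
Qed.

End Entropy.

Section Combine.
Variable R : realType.

Lemma combine (F p c S delta : R) :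
  0 < F -> F <= 1 -> 0 <= p -> p <= 1 -> 0 <= c -> c <= 1 - F ^+ 2 ->
  1 - F ^+ 2 <= delta -> delta <= 1 ->
  (forall r, 0 < r -> r * S <= r ^+ 2 * (F ^+ 2 * p) + c) ->
  F ^+ 2 * p + c + S <= p + 2 * Num.sqrt delta.
Proof.
move=> F0 F1 p0 p1 c0 cF Fd d1 hr.
have d0 : 0 <= delta by lra.
set q := Num.sqrt delta.
have q0 : 0 <= q by exact: sqrtr_ge0.
have qq : q ^+ 2 = delta by rewrite sqr_sqrtr.
have q1 : q <= 1 by nra.
have [qz|qpos] := eqVneq q 0.
  have dz : delta = 0 by rewrite -qq qz expr0n.
  have cz : c = 0 by lra.
  have FF : F ^+ 2 = 1 by nra.
  have S0 : S <= 0.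
    rewrite leNgt; apply/negP => Sp.
    have := hr (S / (p + 1)) (divr_gt0 Sp (ltr_wpDl p0 ltr01)).
    rewrite FF mul1r cz addr0 => h.
    have hp1 : 0 < p + 1 by lra.
    have u0 : 0 < S / (p + 1) by rewrite divr_gt0.
    have hu : S / (p + 1) * (p + 1) = S by rewrite divfK ?gt_eqF.
    move: h hu u0; set u := S / (p + 1) => h hu u0.
    nra.
  rewrite qz FF; lra.
have qp : 0 < q by rewrite lt_def qpos q0.
set r := q / F.
have r0 : 0 < r by rewrite divr_gt0.
have h := hr r r0.
have hS : S <= r * (F ^+ 2 * p) + c / r.
  rewrite -(ler_pM2l r0) mulrDr [r * (c / r)]mulrC divfK ?gt_eqF //.
  by rewrite mulrA -expr2.
have e1 : r * (F ^+ 2 * p) = q * F * p by rewrite /r; field; rewrite gt_eqF.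
have e2 : c / r <= q * F.
  rewrite /r invf_div mulrA ler_pdivrMr //.
  have : c <= q ^+ 2 by lra.
  nra.
have hS' : S <= q * F * p + q * F by lra.
have t1 : (1 - F ^+ 2) * (1 - p) <= q * (1 - p).
  apply: ler_wpM2r; first lra.
  have : q ^+ 2 <= q by rewrite expr2 ger_pMl.
  lra.
have t2 : q * F * (1 + p) <= q * (1 + p).
  have h1 : 0 <= q * (1 - F) * (1 + p).
    by apply: mulr_ge0; [apply: mulr_ge0 => //; lra | lra].
  nra.
nra.
Qed.

End Combine.

Section PerState.
Variable R : realType.
Local Notation C := R[i].
Local Notation "x %:C" := ((x%:C)%C : C) : ring_scope.
Variables dB dC : nat.

Lemma ge0_realC (x : C) : 0 <= x -> x = (complex.Re x)%:C.
Proof. case: x => a b; rewrite lecE /= => /andP[/eqP hb _]; by rewrite hb. Qed.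

Lemma tstar_adj m n (M : 'M[C]_(m, n)) : map_mx Num.conj (M^T) = adj M.
Proof. by rewrite /adj map_trmx. Qed.

Lemma tv0r (a : 'cV[C]_dB) : tv a (0 : 'cV[C]_dC) = 0.
Proof. by apply/matrixP => p j; rewrite /tv !mxE mulr0. Qed.

Lemma cV_tidx_eq (x y : 'cV[C]_(dB * dC)) :
  (forall i j, x (tidx i j) 0 = y (tidx i j) 0) -> x = y.
Proof.
move=> H; apply/matrixP => p k; rewrite ord1.
by case/mxvec_indexP: p => i j; exact: H.
Qed.

Lemma ReC_mul (a : R) (z : C) : complex.Re (a%:C * z) = a * complex.Re z.
Proof. exact: ReRM. Qed.

End PerState.

Section PerState2.
Variable R : realType.
Local Notation C := R[i].
Local Notation "x %:C" := ((x%:C)%C : C) : ring_scope.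
Variables dB dC : nat.

Lemma per_state (phi : 'cV[C]_(dB * dC)) (M : 'M[C]_(dB * dC)) (delta : R) :
  (0 < dB)%N -> unit_ket phi -> log2 (dB%:R : R) - delta <= ent_entropy phi ->
  0 <= delta -> delta < 1 ->
  psdmx M -> psdmx (1%:M - M) -> psdmx (ptranspose M) ->
  complex.Re (fm phi M phi) <= complex.Re (\tr M) / dB%:R + 2 * Num.sqrt delta.
Proof.
move=> dB0 hunit hent d0 d1 hM hIM hN.
pose A : 'M[C]_(dB, dC) := \matrix_(i, j) phi (tidx i j) 0.
have hrho : ptraceC (proj phi) = A *m adj A.
  apply/matrixP => i k; rewrite /ptraceC /proj !mxE; apply: eq_bigr => j _.
  by rewrite !mxE big_ord1 /adj !mxE.
set rho := ptraceC (proj phi) in hrho hent.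
have rho_adj : adj rho = rho by rewrite hrho adjM adjK.
have rho_n : rho \is normalmx.
  by apply/normalmxP; rewrite tstar_adj rho_adj.
set P := spectralmx rho.
set D := spectral_diag rho.
have PU : P *m adj P = 1%:M.
  by rewrite -tstar_adj; apply/unitarymxP; exact: spectral_unitarymx.
have PU' : adj P *m P = 1%:M by exact: mulmx1C.
have hrhoD : rho = adj P *m diag_mx D *m P.
  rewrite -tstar_adj -invmx_unitary; last exact: spectral_unitarymx.
  exact/orthomx_spectralP.
pose B := P *m A.
have hBB : B *m adj B = diag_mx D.
  rewrite /B adjM !mulmxA -(mulmxA P) -hrho hrhoD.
  by rewrite !mulmxA PU mul1mx -mulmxA PU mulmx1.
have hBBe s t : \sum_j B s j * (B t j)^* = D 0 s *+ (s == t).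
  move/matrixP/(_ s t): hBB; rewrite !mxE => <-.
  by apply: eq_bigr => j _; rewrite /adj !mxE.
pose lam s := complex.Re (D 0 s).
have hDs s : D 0 s = \sum_j B s j * (B s j)^*.
  by have := hBBe s s; rewrite eqxx mulr1n.
have hD0 s : 0 <= D 0 s.
  by rewrite hDs; apply: sumr_ge0 => j _; exact: mulcJ_ge0.
have hD s : D 0 s = (lam s)%:C by apply: ge0_realC.
have lam0 s : 0 <= lam s by exact: Re_ge0.
have trrho : \tr rho = 1.
  rewrite /rho /ptraceC /mxtrace.
  under eq_bigr => i _ do rewrite mxE.
  rewrite -(sum_tidx (fun p => proj phi p p)) -/(mxtrace _) /proj mxtrace_mulC trace_mx11.
  by move: hunit; rewrite /unit_ket => ->; rewrite mxE.
have hsum : \sum_s lam s = 1.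
  rewrite /lam -Re_sum -mxtrace_diag -hBB /B adjM !mulmxA -(mulmxA P) -hrho.
  by rewrite mxtrace_mulC mulmxA PU' mul1mx trrho.
have hZ : dB%:R * (1 - delta) <= (\sum_s Num.sqrt (lam s)) ^+ 2.
  apply: entropy_bound => //; exact: hent.
pose v s : 'cV[C]_dB := \col_i (P s i)^*.
pose b s : 'cV[C]_dC := \col_j B s j.
pose mu s := if lam s == 0 then 0 else (Num.sqrt (lam s))^-1.
pose w s : 'cV[C]_dC := (mu s)%:C *: b s.
have conjR (a : R) : (a%:C)^* = a%:C by exact: (conjc_real a).
have ip_v s t : ip (v s) (v t) = (s == t)%:R.
  rewrite ipE /v; move/matrixP/(_ s t): PU; rewrite !mxE => <-.
  by apply: eq_bigr => i _; rewrite !mxE conjCK.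
have ip_b s t : ip (b s) (b t) = (lam s)%:C *+ (s == t).
  rewrite ipE /b; transitivity (\sum_j B t j * (B s j)^*).
    by apply: eq_bigr => j _; rewrite !mxE mulrC.
  rewrite hBBe; case: eqVneq => [->|nst]; first by rewrite hD.
  by rewrite !mulr0n.
have ip_w s t : ip (w s) (w t) = (mu s * mu t * lam s)%:C *+ (s == t).
  rewrite /w /ip fmZl fmZr -[fm (b s) _ (b t)]/(ip (b s) (b t)) ip_b conjR.
  case: eqP => [<-|_]; last by rewrite !mulr0n !mulr0.
  by rewrite !mulr1n !rmorphM /= mulrA.
have hmu s : lam s != 0 -> mu s * mu s * lam s = 1.
  move=> ls; rewrite /mu (negbTE ls).
  have sq : 0 < Num.sqrt (lam s) by rewrite sqrtr_gt0 lt_def ls lam0.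
  rewrite -{3}(sqr_sqrtr (lam0 s)) expr2; field; exact: lt0r_neq0.
have hw_orth s t : s != t -> ip (w s) (w t) = 0.
  by move=> nst; rewrite ip_w (negbTE nst) mulr0n.
have hw_norm s : ip (w s) (w s) = 1 \/ w s = 0.
  case: (eqVneq (lam s) 0) => [ls|ls].
    right; rewrite /w /mu ls eqxx.
    by rewrite (_ : (0 : R)%:C = 0) ?scale0r.
  by left; rewrite ip_w eqxx mulr1n hmu.
have hbw s : ip (b s) (w s) = (Num.sqrt (lam s))%:C.
  rewrite /w /ip fmZr -[fm (b s) _ (b s)]/(ip (b s) (b s)) ip_b eqxx mulr1n -rmorphM /=.
  congr (_%:C); rewrite /mu; case: eqVneq => [->|ls]; first by rewrite sqrtr0 mulr0.
  have sq : 0 < Num.sqrt (lam s) by rewrite sqrtr_gt0 lt_def ls lam0.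
  rewrite -{2}(sqr_sqrtr (lam0 s)) expr2; field; exact: lt0r_neq0.
have hphi : phi = \sum_s tv (v s) (b s).
  apply: cV_tidx_eq => i j; rewrite summxE.
  under eq_bigr => s _ do rewrite tvE /v /b !mxE.
  have -> : phi (tidx i j) 0 = (adj P *m B) i j by rewrite /B mulmxA PU' mul1mx mxE.
  rewrite mxE; apply: eq_bigr => s _.
  by rewrite /adj !mxE.
pose c := (Num.sqrt (dB%:R : R))^-1.
have dBR : 0 < (dB%:R : R) by rewrite ltr0n.
have c0 : 0 < c by rewrite invr_gt0 sqrtr_gt0.
have cc : c * c = (dB%:R)^-1.
  by rewrite /c -invfM -expr2 sqr_sqrtr // ltW.
set Z := \sum_s Num.sqrt (lam s) in hZ.
pose F := c * Z.
pose Phi := \sum_s c%:C *: tv (v s) (w s).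
have G1 : ip phi Phi = F%:C.
  rewrite hphi /Phi /ip fm_suml.
  transitivity (\sum_s (c * Num.sqrt (lam s))%:C).
    apply: eq_bigr => s _; rewrite fm_sumr (bigD1 s) //= big1 ?addr0.
      by rewrite fmZr -/(ip _ _) ip_tv ip_v eqxx mul1r hbw rmorphM.
    by move=> t nts; rewrite fmZr -/(ip _ _) ip_tv ip_v eq_sym (negbTE nts) mul0r mulr0.
  by rewrite -rmorph_sum /= -mulr_sumr.
have G2 : complex.Re (ip Phi Phi) <= 1.
  rewrite /Phi /ip fm_suml Re_sum.
  have -> : 1 = \sum_(s < dB) c * c.
    rewrite sumr_const card_ord cc.
    have e : (dB%:R : R)^-1 *+ dB = (dB%:R)^-1 * dB%:R by rewrite mulr_natr.
    by rewrite e mulVf // gt_eqF.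
  apply: ler_sum => s _; rewrite fm_sumr (bigD1 s) //= big1 ?addr0.
    rewrite fmZl fmZr -/(ip _ _) ip_tv ip_v eqxx mul1r conjR mulrA -rmorphM ReRM.
    rewrite -[X in _ <= X]mulr1 ler_wpM2l ?mulr_ge0 ?(ltW c0) //.
    by case: (hw_norm s) => [->|->]; [|rewrite /ip fm0l].
  by move=> t nts; rewrite fmZl fmZr -/(ip _ _) ip_tv ip_v eq_sym (negbTE nts) !mul0r !mulr0.
have G3 : complex.Re (fm Phi M Phi) <= complex.Re (\tr M) / dB%:R.
  have -> : fm Phi M Phi = \sum_s \sum_t (c * c)%:C * fm (tv (v s) (w s)) M (tv (v t) (w t)).
    rewrite /Phi fm_suml; apply: eq_bigr => s _; rewrite fm_sumr; apply: eq_bigr => t _.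
    by rewrite fmZl fmZr conjR mulrA -rmorphM.
  have -> : complex.Re (\sum_s \sum_t (c * c)%:C * fm (tv (v s) (w s)) M (tv (v t) (w t)))
     = (c * c) * \sum_s \sum_t complex.Re (fm (tv (v s) (w s)) M (tv (v t) (w t))).
    rewrite Re_sum mulr_sumr; apply: eq_bigr => s _.
    rewrite Re_sum mulr_sumr; apply: eq_bigr => t _; exact: ReRM.
  rewrite mulrC -cc ler_wpM2r ?mulr_ge0 ?(ltW c0) //.
  apply: le_trans (ppt_bound v w hN) _.
  rewrite pair_bigA /=.
  apply: (bessel (e := fun st : 'I_dB * 'I_dB => tv (v st.1) (w st.2))) => //.
    move=> [s1 t1] [s2 t2] /= ne; rewrite ip_tv ip_v.
    case: eqVneq => [es|]; last by rewrite mul0r.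
    rewrite es in ne *; rewrite hw_orth ?mulr0 //.
    by apply: contraNneq ne => ->.
  move=> [s t] /=; rewrite ip_tv ip_v eqxx mul1r.
  by case: (hw_norm t) => [->|->]; [left|right; rewrite tv0r].
have ipphi : ip phi phi = 1.
  by rewrite /ip /fm mulmx1; move: hunit; rewrite /unit_ket => ->; rewrite mxE.
have Z0 : 0 <= Z by apply: sumr_ge0 => s _; exact: sqrtr_ge0.
have F0 : 0 <= F by rewrite mulr_ge0 ?(ltW c0).
have FF : 1 - delta <= F ^+ 2.
  rewrite /F exprMn -[c ^+ 2]/(c * c) cc -(ler_pM2l dBR) mulrA mulfV ?gt_eqF // mul1r.
  exact: hZ.
have Fpos : 0 < F.
  rewrite lt_def F0 andbT; apply/negP => /eqP F0'.
  by move: FF; rewrite F0' expr0n /=; lra.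
pose x := F%:C *: Phi.
pose y := phi - x.
have ephi : phi = x + y by rewrite /y addrC subrK.
pose p := complex.Re (fm Phi M Phi).
pose cf := complex.Re (fm y M y).
pose S := complex.Re (fm x M y + fm y M x).
have hxx : complex.Re (fm x M x) = F ^+ 2 * p.
  by rewrite /x fmZl fmZr conjR mulrA -rmorphM ReRM expr2.
have hdec : complex.Re (fm phi M phi) = F ^+ 2 * p + cf + S.
  have fadd (a1 a2 : 'cV[C]_(dB * dC)) : fm (a1 + a2) M (a1 + a2) = fm a1 M a1 + fm a1 M a2 + fm a2 M a1 + fm a2 M a2.
    by rewrite fmDl !fmDr !addrA.
  rewrite {1 2}ephi (fadd x y) !ReD -hxx /cf /S ReD; lra.
have hIMf z : complex.Re (fm z M z) <= complex.Re (ip z z).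
  have := Re_ge0 (hIM z); rewrite -/(fm _ _ _) fmDm fmNm ReD ReN -/(ip _ _); lra.
have p0 : 0 <= p by exact: Re_ge0 (hM Phi).
have p1 : p <= 1 by apply: le_trans (hIMf Phi) G2.
have cf0 : 0 <= cf by exact: Re_ge0 (hM y).
have hyy : complex.Re (ip y y) = 1 - 2 * F ^+ 2 + F ^+ 2 * complex.Re (ip Phi Phi).
  rewrite /y /x /ip fmBl !fmBr !fmZl !fmZr -!/(ip _ _) ipphi G1 ip_conj G1 conjR.
  rewrite mulrA -!rmorphM !ReB ReRM !ReR !expr2 /=; lra.
have yy0 : 0 <= complex.Re (ip y y) by exact: Re_ge0 (ip_ge0 y).
have FF2 : F ^+ 2 * complex.Re (ip Phi Phi) <= F ^+ 2.
  by rewrite -[X in _ <= X]mulr1 ler_wpM2l // exprn_ge0.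
have F1 : F <= 1 by nra.
have cf1 : cf <= 1 - F ^+ 2 by have := hIMf y; lra.
have hr r : 0 < r -> r * S <= r ^+ 2 * (F ^+ 2 * p) + cf.
  have fsub (a1 a2 : 'cV[C]_(dB * dC)) (rr : R) :
      fm (rr%:C *: a1 - a2) M (rr%:C *: a1 - a2) =
      (rr * rr)%:C * fm a1 M a1 - rr%:C * (fm a1 M a2 + fm a2 M a1) + fm a2 M a2.
    by rewrite fmBl !fmBr !fmZl !fmZr conjR rmorphM /=; ring.
  move=> r0; have := Re_ge0 (hM (r%:C *: x - y)).
  rewrite -/(fm _ _ _) (fsub x y r) ReD ReB !ReRM hxx -/S -/cf expr2.
  nra.
have := combine Fpos F1 p0 p1 cf0 cf1 (ltac:(lra) : 1 - F ^+ 2 <= delta) (ltW d1) hr.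
rewrite -hdec; lra.
Qed.

End PerState2.

Unset Implicit Arguments.
Set Strict Implicit.

Theorem mainTheorem5 (R : realType) (dB dC N : nat) (delta eps : R)
  (phi : 'I_N -> 'cV[R[i]]_(dB * dC)) (M : 'I_N -> 'M[R[i]]_(dB * dC)) :
  (dB <= dC)%N ->
  0 <= delta ->
  (forall k, unit_ket (phi k)) ->
  (forall k, ent_entropy (phi k) >= log2 dB%:R - delta) ->
  POVM M ->
  (forall k, PPT (M k)) ->
  (forall k, complex.Re (\tr (proj (phi k) *m M k)) >= 1 - eps) ->
  eps + Num.sqrt 2 * powR delta (4%:R^-1) < 1 ->
  N%:R <= (1 - eps - Num.sqrt 2 * powR delta (4%:R^-1))^-1 * dC%:R.
Proof.
move=> hdBC d0 hunit hent [hpsd hsum] hppt htr hlt.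
set t := powR delta (4%:R^-1) in hlt *.
set s := Num.sqrt 2 * t in hlt *.
have x0 : 0 < 1 - eps - s by lra.
rewrite -(ler_pM2l x0) mulrA mulfV ?gt_eqF // mul1r.
case: (posnP N) => [N0|Npos].
  by rewrite N0 mulr0 ler0n.
pose k0 := Ordinal Npos.
have hdBdC : (0 < dB * dC)%N.
  rewrite lt0n; apply/negP => /eqP H.
  move: (hunit k0) => /matrixP /(_ 0 0); rewrite !mxE big1.
    by move=> /eqP; rewrite eq_sym oner_eq0.
  by move=> p _; have : (p < 0)%N by rewrite -H ltn_ord.
have dB0 : (0 < dB)%N by move: hdBdC; rewrite muln_gt0 => /andP[].
have t0 : 0 <= t by exact: powR_ge0.
have t4 : t ^+ 4 = delta.
  rewrite -powR_mulrn // -powRrM mulVf ?powRr1 //.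
  by rewrite pnatr_eq0.
have sqd : Num.sqrt delta = t ^+ 2.
  by rewrite -t4 (_ : 4%N = (2 * 2)%N) // exprM sqrtr_sqr ger0_norm // exprn_ge0.
have s2 : Num.sqrt (2 : R) ^+ 2 = 2 by rewrite sqr_sqrtr.
have s20 : 0 <= Num.sqrt (2 : R) by exact: sqrtr_ge0.
have hIM k : psdmx (1%:M - M k).
  have -> : 1%:M - M k = \sum_(j | j != k) M j.
    by rewrite -hsum (bigD1 k) //= addrAC subrr add0r.
  by move=> v; rewrite -/(fm _ _ _) fm_summ; apply: sumr_ge0 => j _; exact: hpsd.
have htr' k : complex.Re (\tr (proj (phi k) *m M k)) = complex.Re (fm (phi k) (M k) (phi k)).
  by rewrite /proj -mulmxA mxtrace_mulC trace_mx11.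
have ipphi k : ip (phi k) (phi k) = 1.
  by rewrite /ip /fm mulmx1; move: (hunit k); rewrite /unit_ket => ->; rewrite mxE.
have le1 k : complex.Re (fm (phi k) (M k) (phi k)) <= 1.
  have := Re_ge0 (hIM k (phi k)); rewrite -/(fm _ _ _) fmDm fmNm ReD ReN -/(ip _ _) ipphi.
  by rewrite ReR; lra.
have eps0 : 0 <= eps by have := htr k0; rewrite htr'; have := le1 k0; lra.
have st1 : s < 1 by lra.
have tt : 2 * t ^+ 2 <= s.
  have : s ^+ 2 = 2 * t ^+ 2 by rewrite /s exprMn s2.
  have s0 : 0 <= s by rewrite /s mulr_ge0.
  nra.
have d1 : delta < 1.
  have : s ^+ 2 = 2 * t ^+ 2 by rewrite /s exprMn s2.
  rewrite -t4; nra.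
have per k : complex.Re (fm (phi k) (M k) (phi k)) <=
    complex.Re (\tr (M k)) / dB%:R + 2 * Num.sqrt delta.
  exact: (per_state dB0 (hunit k) (hent k) d0 d1 (hpsd k) (hIM k) (hppt k)).
have hlow : N%:R * (1 - eps) <= \sum_k complex.Re (fm (phi k) (M k) (phi k)).
  have -> : N%:R * (1 - eps) = \sum_(k < N) (1 - eps) by rewrite sumr_const card_ord mulr_natl.
  apply: ler_sum => k _.
  by rewrite -htr'; exact: htr.
have hup : \sum_k complex.Re (fm (phi k) (M k) (phi k)) <= dC%:R + N%:R * (2 * t ^+ 2).
  apply: le_trans (ler_sum _ (fun k _ => per k)) _.
  rewrite big_split /= -mulr_suml -Re_sum -mxtrace_sum hsum mxtrace1.
  rewrite sumr_const card_ord sqd mulr_natl.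
  have -> : complex.Re ((dB * dC)%:R : R[i]) = (dB * dC)%:R.
    by rewrite -(rmorph_nat (real_complex R)).
  rewrite natrM mulrAC mulfV ?mul1r; first by rewrite [N%:R * _]mulr_natl.
  by rewrite pnatr_eq0 -lt0n.
have : N%:R * (2 * t ^+ 2) <= N%:R * s by rewrite ler_wpM2l.
nra.
Qed.
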